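(* Let $\mathcal{S}$ be an $E$-unitary inverse semigroupoid, $X$ a partially ordered set, and $\theta=(\{X_s\}_{s\in\mathcal{S}},\{\theta_s\}_{s\in\mathcal{S}})$ an ordered global action of $\mathcal{S}$ on $X$. For $s\in\mathcal{S}$ put $D_{\pi_\sigma(s)}=\bigcup_{t:(s,t)\in\sigma}X_t$. Then: if $(s,t)\in\sigma$ and $x\in X_{s^*}\cap X_{t^*}$, then $\theta_s(x)=\theta_t(x)$; consequently $\alpha_{\pi_\sigma(s)}:D_{\pi_\sigma(s^* )}\to D_{\pi_\sigma(s)}$, $\alpha_{\pi_\sigma(s)}(x)=\theta_t(x)$ for any $t$ with $(s,t)\in\sigma$ and $x\in X_{t^*}$, is well defined, and $\alpha=(\{D_{\pi_\sigma(s)}\}_{s\in\mathcal{S}},\{\alpha_{\pi_\sigma(s)}\}_{s\in\mathcal{S}})$ is an ordered partial action of the groupoid $\mathcal{S}/\sigma$ on $X$ with $\alpha_{\pi_\sigma(s)}(x)=\theta_s(x)$ for all $x\in X_{s^*}$.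
   Context: Inverse semigroupoid: arrows $\mathcal{S}$, objects $\mathcal{S}^{(0)}$, maps $d,c$, associative multiplication on $\mathcal{S}^{(2)}=\{(s,t):d(s)=c(t)\}$ with $d(st)=d(t)$, $c(st)=c(s)$, unique $s^*$ with $ss^*s=s$, $s^*ss^*=s^*$; $E(\mathcal{S})$ = idempotents; natural order on parallel arrows $s\leqslant t$ iff $s=te$ for an idempotent $e$ with $(t,e)\in\mathcal{S}^{(2)}$. $(s,t)\in\sigma$ iff some $r\leqslant s,t$; $\sigma$ is a congruence (it relates only parallel arrows and is compatible with products), and $\mathcal{S}/\sigma$ is the groupoid whose arrows are $\sigma$-classes $\pi_\sigma(s)$, objects $\mathcal{S}^{(0)}$, $d(\pi_\sigma(s))=d(s)$, $c(\pi_\sigma(s))=c(s)$, $\pi_\sigma(s)\pi_\sigma(t)=\pi_\sigma(st)$, $\pi_\sigma(s)^*=\pi_\sigma(s^* )$. $\mathcal{S}$ is $E$-unitary if $(s,e)\in\sigma$ with $e$ idempotent implies $s$ idempotent. A partial action of $\mathcal{S}$ on a set $X$ is a pair $(\{X_s\},\{\theta_s\})$, $X_s\subseteq X$, $\theta_s:X_{s^*}\to X_s$, with: each $\theta_s$ bijective, $\theta_s^{-1}=\theta_{s^*}$, $X=\bigcup_sX_s$; $\theta_s\circ\theta_t\subseteq\theta_{st}$ as partial maps for $(s,t)\in\mathcal{S}^{(2)}$; $X_s\subseteq X_t$ if $s\leqslant t$. Global: $\theta_s\circ\theta_t=\theta_{st}$. Ordered (on a poset): each $X_s$ an order ideal and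 each $\theta_s$ an order isomorphism. *)

(* Defs.v *)
(* plain Rocq, sets as predicates, partial maps as total
   functions together with a domain predicate. *)

Record inverse_semigroupoid := {
  arr : Type;
  obj : Type;
  dom : arr -> obj;
  cod : arr -> obj;
  mul : arr -> arr -> arr;          (* product, meaningful on S^(2) *)
  inv : arr -> arr;
  dom_mul : forall s t, dom s = cod t -> dom (mul s t) = dom t;
  cod_mul : forall s t, dom s = cod t -> cod (mul s t) = cod s;
  mulA : forall s t u, dom s = cod t -> dom t = cod u ->
           mul (mul s t) u = mul s (mul t u);
  inv_spec : forall s, dom s = cod (inv s) /\ dom (inv s) = cod s /\
           mul (mul s (inv s)) s = s /\ mul (mul (inv s) s) (inv s) = inv s;
  inv_unique : forall s t, dom s = cod t -> dom t = cod s ->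
           mul (mul s t) s = s -> mul (mul t s) t = t -> t = inv s
}.

Arguments dom {_}. Arguments cod {_}. Arguments mul {_}. Arguments inv {_}.

Section Semigroupoid.
Variable S : inverse_semigroupoid.

Definition composable (s t : arr S) : Prop := dom s = cod t.

Definition idempotent (e : arr S) : Prop := composable e e /\ mul e e = e.

Definition nat_le (s t : arr S) : Prop :=
  dom s = dom t /\ cod s = cod t /\
  exists e, idempotent e /\ composable t e /\ s = mul t e.

Definition sigma (s t : arr S) : Prop := exists r, nat_le r s /\ nat_le r t.

Definition E_unitary : Prop :=
  forall s e, idempotent e -> sigma s e -> idempotent s.

(** Natural order of the quotient groupoid S/sigma, written on representatives:
    pi(s) <= pi(t) iff they are parallel and pi(s) = pi(t) pi(u) for an
    idempotent pi(u) of S/sigma with (pi(t),pi(u)) composable. *)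
Definition quot_le (s t : arr S) : Prop :=
  dom s = dom t /\ cod s = cod t /\
  exists u, composable t u /\ composable u u /\ sigma (mul u u) u /\
            sigma s (mul t u).

End Semigroupoid.

Arguments composable {_}. Arguments idempotent {_}. Arguments nat_le {_}.
Arguments sigma {_}. Arguments quot_le {_}.

Definition bij_on {X : Type} (A B : X -> Prop) (f : X -> X) : Prop :=
  (forall x, A x -> B (f x)) /\
  (forall x y, A x -> A y -> f x = f y -> x = y) /\
  (forall y, B y -> exists x, A x /\ f x = y).

Definition order_ideal {X : Type} (leX : X -> X -> Prop) (A : X -> Prop) : Prop :=
  forall x y, A y -> leX x y -> A x.

(** * Partial actions, for a generic index structure
    (comp = composability, mulI = product, invI = inverse, leI = natural order).
    [Xs s] is the domain predicate of X_s, [th s] the map theta_s : X_{s^*} -> X_s. *)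
Definition partial_action {I X : Type} (comp : I -> I -> Prop)
    (mulI : I -> I -> I) (invI : I -> I) (leI : I -> I -> Prop)
    (Xs : I -> X -> Prop) (th : I -> X -> X) : Prop :=
  (forall s, bij_on (Xs (invI s)) (Xs s) (th s)) /\
  (forall s, (forall x, Xs (invI s) x -> th (invI s) (th s x) = x) /\
             (forall y, Xs s y -> th s (th (invI s) y) = y)) /\
  (forall x, exists s, Xs s x) /\
  (forall s t, comp s t -> forall x, Xs (invI t) x -> Xs (invI s) (th t x) ->
       Xs (invI (mulI s t)) x /\ th (mulI s t) x = th s (th t x)) /\
  (forall s t, leI s t -> forall x, Xs s x -> Xs t x).

Definition ordered_action {I X : Type} (leX : X -> X -> Prop) (invI : I -> I)
    (Xs : I -> X -> Prop) (th : I -> X -> X) : Prop :=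
  (forall s, order_ideal leX (Xs s)) /\
  (forall s x y, Xs (invI s) x -> Xs (invI s) y ->
       (leX x y <-> leX (th s x) (th s y))).

Definition global_action {I X : Type} (comp : I -> I -> Prop)
    (mulI : I -> I -> I) (invI : I -> I)
    (Xs : I -> X -> Prop) (th : I -> X -> X) : Prop :=
  forall s t, comp s t -> forall x,
    ((Xs (invI t) x /\ Xs (invI s) (th t x)) <-> Xs (invI (mulI s t)) x) /\
    (Xs (invI t) x -> Xs (invI s) (th t x) -> th (mulI s t) x = th s (th t x)).

Definition sg_partial_action (S : inverse_semigroupoid) {X : Type}
    (Xs : arr S -> X -> Prop) (th : arr S -> X -> X) : Prop :=
  partial_action composable mul inv nat_le Xs th.

Definition sg_global_action (S : inverse_semigroupoid) {X : Type}
    (Xs : arr S -> X -> Prop) (th : arr S -> X -> X) : Prop :=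
  sg_partial_action S Xs th /\ global_action composable mul inv Xs th.

(** A family indexed by S/sigma is represented by a family indexed by S that
    is constant on sigma-classes; the groupoid operations of S/sigma are
    computed on representatives (pi(s)pi(t) = pi(st), pi(s)^* = pi(inv s),
    (pi s, pi t) composable iff d s = c t). *)
Definition sigma_invariant {S : inverse_semigroupoid} {X : Type}
    (D : arr S -> X -> Prop) (al : arr S -> X -> X) : Prop :=
  forall s t, sigma s t ->
    (forall x, D s x <-> D t x) /\ (forall x, D (inv s) x -> al s x = al t x).

Definition quot_partial_action (S : inverse_semigroupoid) {X : Type}
    (D : arr S -> X -> Prop) (al : arr S -> X -> X) : Prop :=
  sigma_invariant D al /\ partial_action composable mul inv quot_le D al.

Definition Dsig {S : inverse_semigroupoid} {X : Type}
    (Xs : arr S -> X -> Prop) (s : arr S) (x : X) : Prop :=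
  exists t, sigma s t /\ Xs t x.

(* Main.v *)
Require Import Defs.
From Stdlib Require Import Classical ClassicalEpsilon.

Section Alg.
Variable S : inverse_semigroupoid.
Implicit Types s t u e f a b x : arr S.

Lemma dom_inv s : dom (inv s) = cod s.
Proof. exact (proj1 (proj2 (inv_spec S s))). Qed.
Lemma cod_inv s : cod (inv s) = dom s.
Proof. exact (eq_sym (proj1 (inv_spec S s))). Qed.
Lemma dmul s t : dom s = cod t -> dom (mul s t) = dom t. Proof. apply dom_mul. Qed.
Lemma cmul s t : dom s = cod t -> cod (mul s t) = cod s. Proof. apply cod_mul. Qed.
Lemma massoc s t u : dom s = cod t -> dom t = cod u -> mul (mul s t) u = mul s (mul t u).
Proof. apply mulA. Qed.

Ltac dc := rewrite ?dom_inv, ?cod_inv in *; repeat first [ rewrite dom_inv | rewrite cod_inv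
   | match goal with |- context [dom (mul ?a ?b)] => rewrite (dmul a b) by dc end
   | match goal with |- context [cod (mul ?a ?b)] => rewrite (cmul a b) by dc end ];
  congruence.
Ltac rassoc := repeat (rewrite massoc by dc).

Lemma sss s : mul s (mul (inv s) s) = s.
Proof. destruct (inv_spec S s) as [_ [_ [H _]]]. rewrite massoc in H by dc. exact H. Qed.
Lemma sss' s : mul (inv s) (mul s (inv s)) = inv s.
Proof. destruct (inv_spec S s) as [_ [_ [_ H]]]. rewrite massoc in H by dc. exact H. Qed.

Lemma inv_inv s : inv (inv s) = s.
Proof.
  symmetry. apply inv_unique; try dc.
  - destruct (inv_spec S s) as [_ [_ [_ H]]]. exact H.
  - destruct (inv_spec S s) as [_ [_ [H _]]]. exact H.
Qed.

Lemma sss_t s x : dom s = cod x -> mul s (mul (inv s) (mul s x)) = mul s x.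
Proof. intro. transitivity (mul (mul s (mul (inv s) s)) x); [rassoc; reflexivity|]. now rewrite sss. Qed.
Lemma sss'_t s x : dom (inv s) = cod x -> mul (inv s) (mul s (mul (inv s) x)) = mul (inv s) x.
Proof. intro. transitivity (mul (mul (inv s) (mul s (inv s))) x); [rassoc; reflexivity|]. now rewrite sss'. Qed.

Lemma idem_inv e : idempotent e -> inv e = e.
Proof. intros [H1 H2]. unfold composable in H1. symmetry. apply inv_unique; try congruence; now rewrite !H2. Qed.

Lemma idem_t e x : idempotent e -> dom e = cod x -> mul e (mul e x) = mul e x.
Proof. intros [H1 H2] H. unfold composable in H1. rewrite <- massoc by dc. now rewrite H2. Qed.

Lemma idem_ss s : idempotent (mul s (inv s)).
Proof. split. unfold composable. dc. rassoc. now rewrite sss'. Qed.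
Lemma idem_s's s : idempotent (mul (inv s) s).
Proof. pose proof (idem_ss (inv s)). now rewrite inv_inv in H. Qed.

Ltac rassoc_in H := repeat (rewrite massoc in H by dc).

Lemma idem_mul_idem e f : idempotent e -> idempotent f -> dom e = dom f ->
  mul (mul e f) (mul e f) = mul e f.
Proof.
  intros He Hf Hef. pose proof He as [He1 He2]. pose proof Hf as [Hf1 Hf2].
  unfold composable in *.
  pose proof (inv_spec S (mul e f)) as [_ [_ [sp1 sp2]]].
  assert (da : dom (inv (mul e f)) = dom e) by dc.
  assert (ca : cod (inv (mul e f)) = dom e) by dc.
  assert (Inv : inv (inv (mul e f)) = mul e f) by apply inv_inv.
  assert (C1 : mul f (mul (inv (mul e f)) e) = inv (mul e f)).
  { apply inv_unique; [dc|dc| |].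
    - rassoc. rewrite (idem_t f) by dc. rewrite (idem_t e) by dc. rassoc_in sp1. exact sp1.
    - rassoc. rewrite (idem_t e) by dc. rewrite (idem_t f) by dc.
      rassoc_in sp2.
      transitivity (mul f (mul (mul (inv (mul e f)) (mul e (mul f (inv (mul e f))))) e)).
      + rassoc. reflexivity.
      + now rewrite sp2. }
  remember (inv (mul e f)) as a eqn:Ea.
  assert (T : mul a (mul e (mul f (mul a e))) = mul a e).
  { rassoc_in sp2. transitivity (mul (mul a (mul e (mul f a))) e).
    + rassoc. reflexivity.
    + now rewrite sp2. }
  assert (C2 : mul a a = a).
  { rewrite <- C1 at 1 2. rassoc. rewrite T. exact C1. }
  assert (Ia : inv a = a) by (apply idem_inv; split; [unfold composable; congruence| exact C2]).
  rewrite Inv in Ia. rewrite Ia. exact C2.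
Qed.

Lemma idem_comm e f : idempotent e -> idempotent f -> dom e = dom f -> mul e f = mul f e.
Proof.
  intros He Hf Hef.
  pose proof (idem_mul_idem e f He Hf Hef) as I1.
  pose proof (idem_mul_idem f e Hf He (eq_sym Hef)) as I2.
  pose proof He as [He1 He2]. pose proof Hf as [Hf1 Hf2]. unfold composable in *.
  assert (Iinv : inv (mul e f) = mul e f) by (apply idem_inv; split; [unfold composable; dc | exact I1]).
  rewrite <- Iinv at 1. symmetry. apply inv_unique; [dc|dc| |].
  - rassoc. rewrite (idem_t f) by dc. rewrite (idem_t e) by dc. rassoc_in I1. exact I1.
  - rassoc. rewrite (idem_t e) by dc. rewrite (idem_t f) by dc. rassoc_in I2. exact I2.
Qed.


Lemma idem_prod e f : idempotent e -> idempotent f -> dom e = dom f -> idempotent (mul e f).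
Proof.
  intros He Hf H. pose proof He as [He1 _]. pose proof Hf as [Hf1 _]. unfold composable in *.
  split; [unfold composable; dc| now apply idem_mul_idem].
Qed.

Lemma idem_dc e : idempotent e -> dom e = cod e.
Proof. intros [H _]. exact H. Qed.

Lemma inv_mul a b : dom a = cod b -> inv (mul a b) = mul (inv b) (inv a).
Proof.
  intro H. symmetry. apply inv_unique; [dc|dc| |].
  - transitivity (mul a (mul (mul (mul b (inv b)) (mul (inv a) a)) b)); [rassoc; reflexivity|].
    rewrite (idem_comm (mul b (inv b)) (mul (inv a) a)) by (apply idem_ss || apply idem_s's || dc).
    rassoc. rewrite sss. apply sss_t. exact H.
  - transitivity (mul (inv b) (mul (mul (mul (inv a) a) (mul b (inv b))) (inv a))); [rassoc; reflexivity|].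
    rewrite (idem_comm (mul (inv a) a) (mul b (inv b))) by (apply idem_ss || apply idem_s's || dc).
    rassoc. rewrite sss'. apply sss'_t. dc.
Qed.

Lemma conj_eq e s : idempotent e -> dom e = cod s -> mul s (mul (inv s) (mul e s)) = mul e s.
Proof.
  intros He H. pose proof (idem_dc e He).
  transitivity (mul (mul (mul s (inv s)) e) s); [rassoc; reflexivity|].
  rewrite (idem_comm (mul s (inv s)) e) by (apply idem_ss || assumption || dc).
  rassoc. rewrite sss. reflexivity.
Qed.

Lemma conj_t e s x : idempotent e -> dom e = cod s -> dom s = cod x ->
  mul s (mul (inv s) (mul e (mul s x))) = mul e (mul s x).
Proof.
  intros He H H'. pose proof (idem_dc e He).
  transitivity (mul (mul s (mul (inv s) (mul e s))) x); [rassoc; reflexivity|].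
  rewrite conj_eq by assumption. rassoc. reflexivity.
Qed.

Lemma conj_idem e s : idempotent e -> dom e = cod s -> idempotent (mul (inv s) (mul e s)).
Proof.
  intros He H. pose proof (idem_dc e He).
  split; [unfold composable; dc|]. rassoc. rewrite conj_eq by dc.
  rewrite idem_t by (assumption || dc). reflexivity.
Qed.

Lemma le_refl s : nat_le s s.
Proof.
  split; [reflexivity|split; [reflexivity|]]. exists (mul (inv s) s).
  split; [apply idem_s's|split; [unfold composable; dc| symmetry; apply sss]].
Qed.

Lemma le_right s e : idempotent e -> dom s = cod e -> nat_le (mul s e) s.
Proof.
  intros He H. pose proof (idem_dc e He).
  split; [dc|split; [dc|]]. exists e. split; [exact He|split; [exact H|reflexivity]].
Qed.

Lemma le_left e s : idempotent e -> dom e = cod s -> nat_le (mul e s) s.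
Proof.
  intros He H. pose proof (idem_dc e He).
  split; [dc|split; [dc|]]. exists (mul (inv s) (mul e s)).
  split; [now apply conj_idem|split; [unfold composable; dc| symmetry; now apply conj_eq]].
Qed.

Lemma le_trans r s t : nat_le r s -> nat_le s t -> nat_le r t.
Proof.
  intros [_ [_ [e1 [He1 [H1 E1]]]]] [_ [_ [e2 [He2 [H2 E2]]]]]. unfold composable in *.
  subst. pose proof (idem_dc _ He1). pose proof (idem_dc _ He2).
  rewrite dmul in H1 by assumption.
  rewrite massoc by dc. apply le_right; [apply idem_prod; auto; congruence| dc].
Qed.

Lemma le_mul r s r' s' : nat_le r s -> nat_le r' s' -> dom s = cod s' ->
  nat_le (mul r r') (mul s s').
Proof.
  intros [_ [_ [e [He [H1 E1]]]]] [_ [_ [e' [He' [H2 E2]]]]] H. unfold composable in *.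
  subst. pose proof (idem_dc _ He). pose proof (idem_dc _ He').
  assert (Eq : mul (mul s e) (mul s' e') = mul (mul s s') (mul (mul (inv s') (mul e s')) e')).
  { rassoc. rewrite conj_t by dc. reflexivity. }
  rewrite Eq. apply le_right.
  - apply idem_prod; [apply conj_idem; auto; congruence| exact He'| dc].
  - dc.
Qed.

Lemma le_inv r s : nat_le r s -> nat_le (inv r) (inv s).
Proof.
  intros [_ [_ [e [He [H1 E1]]]]]. unfold composable in *. subst.
  pose proof (idem_dc _ He).
  rewrite inv_mul by assumption. rewrite idem_inv by assumption.
  apply le_left; [exact He| dc].
Qed.

Lemma le_par r s : nat_le r s -> dom r = dom s /\ cod r = cod s.
Proof. intros [A [B _]]. auto. Qed.

Lemma sig_refl s : sigma s s.
Proof. exists s. split; apply le_refl. Qed.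
Lemma sig_sym s t : sigma s t -> sigma t s.
Proof. intros [r [A B]]. exists r. auto. Qed.
Lemma sig_par s t : sigma s t -> dom s = dom t /\ cod s = cod t.
Proof. intros [r [A B]]. apply le_par in A. apply le_par in B. intuition congruence. Qed.
Lemma sig_le r s : nat_le r s -> sigma r s.
Proof. intro H. exists r. split; [apply le_refl|exact H]. Qed.

Lemma sig_trans s t u : sigma s t -> sigma t u -> sigma s u.
Proof.
  intros [r1 [A1 B1]] [r2 [A2 B2]].
  pose proof B1 as [_ [_ [e1 [He1 [H1 E1]]]]]. pose proof A2 as [_ [_ [e2 [He2 [H2 E2]]]]].
  unfold composable in *. pose proof (idem_dc _ He1). pose proof (idem_dc _ He2).
  exists (mul r1 e2). split.
  - apply le_trans with r1; [apply le_right; [exact He2| subst; dc] | exact A1].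
  - apply le_trans with r2; [|exact B2].
    replace (mul r1 e2) with (mul r2 e1).
    + apply le_right; [exact He1| subst; dc].
    + subst. rassoc. rewrite (idem_comm e2 e1); auto. congruence.
Qed.

Lemma sig_inv s t : sigma s t -> sigma (inv s) (inv t).
Proof. intros [r [A B]]. exists (inv r). split; apply le_inv; assumption. Qed.

Lemma sig_mul s t s' t' : sigma s t -> sigma s' t' -> dom s = cod s' -> sigma (mul s s') (mul t t').
Proof.
  intros [r [A B]] [r' [A' B']] H.
  pose proof (sig_par s t (ex_intro _ r (conj A B))) as [P1 P2].
  pose proof (sig_par s' t' (ex_intro _ r' (conj A' B'))) as [P3 P4].
  exists (mul r r'). split; apply le_mul; auto; congruence.
Qed.

Lemma sig_uu u : dom u = cod u -> sigma (mul u u) u -> sigma u (mul (inv u) u).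
Proof.
  intros Hu H.
  assert (H1 : sigma (mul (inv u) (mul u u)) (mul (inv u) u)) by (apply sig_mul; [apply sig_refl|exact H|dc]).
  rewrite <- massoc in H1 by dc.
  apply sig_trans with (mul (mul (inv u) u) u); [|exact H1].
  apply sig_sym, sig_le. apply le_left; [apply idem_s's| dc].
Qed.

Lemma EU_idem s t : E_unitary S -> sigma t s -> idempotent (mul t (inv s)).
Proof.
  intros EU H. pose proof (sig_par _ _ H) as [P1 P2].
  apply EU with (mul s (inv s)); [apply idem_ss|].
  apply sig_mul; [exact H| apply sig_refl| dc].
Qed.

End Alg.

Section Act.
Variable S : inverse_semigroupoid.
Variable X : Type.
Variable leX : X -> X -> Prop.
Variable Xs : arr S -> X -> Prop.
Variable th : arr S -> X -> X.
Hypothesis EU : E_unitary S.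
Hypothesis HG : sg_global_action S Xs th.
Hypothesis HO : ordered_action leX inv Xs th.

Ltac dc := rewrite ?dom_inv, ?cod_inv in *; repeat first [ rewrite dom_inv | rewrite cod_inv
   | match goal with |- context [dom (mul ?a ?b)] => rewrite (dmul _ a b) by dc end
   | match goal with |- context [cod (mul ?a ?b)] => rewrite (cmul _ a b) by dc end ];
  congruence.

Lemma P_bij s : bij_on (Xs (inv s)) (Xs s) (th s).
Proof. destruct HG as [[P _] _]. apply P. Qed.
Lemma P_maps s x : Xs (inv s) x -> Xs s (th s x).
Proof. apply (P_bij s). Qed.
Lemma P_inj s x y : Xs (inv s) x -> Xs (inv s) y -> th s x = th s y -> x = y.
Proof. apply (P_bij s). Qed.
Lemma P_invl s x : Xs (inv s) x -> th (inv s) (th s x) = x.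
Proof. destruct HG as [[_ [P _]] _]. apply P. Qed.
Lemma P_invr s y : Xs s y -> th s (th (inv s) y) = y.
Proof. destruct HG as [[_ [P _]] _]. apply P. Qed.
Lemma P_cover x : exists s, Xs s x.
Proof. destruct HG as [[_ [_ [P _]]] _]. apply P. Qed.
Lemma G_iff s t x : dom s = cod t ->
  ((Xs (inv t) x /\ Xs (inv s) (th t x)) <-> Xs (inv (mul s t)) x).
Proof. intro H. destruct HG as [_ G]. apply (G s t H x). Qed.
Lemma G_eq s t x : dom s = cod t -> Xs (inv t) x -> Xs (inv s) (th t x) ->
  th (mul s t) x = th s (th t x).
Proof. intro H. destruct HG as [_ G]. apply (G s t H x). Qed.

Lemma idem_id e y : idempotent e -> Xs e y -> th e y = y.
Proof.
  intros He Hy. pose proof (idem_dc _ _ He) as Hd. pose proof (idem_inv _ _ He) as Hi.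
  pose proof (P_maps e y) as M. rewrite Hi in M. specialize (M Hy).
  assert (E : th (mul e e) y = th e (th e y)) by (apply G_eq; [exact Hd| rewrite Hi; auto | rewrite Hi; auto]).
  destruct He as [_ Hee]. rewrite Hee in E.
  symmetry. apply (P_inj e); rewrite ?Hi; auto.
Qed.

Lemma Xss s x : Xs (inv s) x -> Xs (inv (mul (inv s) s)) x /\ th (mul (inv s) s) x = x.
Proof.
  intro H. assert (Hc : dom (inv s) = cod s) by dc.
  assert (H2 : Xs (inv (inv s)) (th s x)) by (rewrite inv_inv; now apply P_maps).
  split.
  - apply G_iff; auto.
  - rewrite G_eq; auto. now apply P_invl.
Qed.

Lemma goalA s t x : sigma s t -> Xs (inv s) x -> Xs (inv t) x -> th s x = th t x.
Proof.
  intros Hst Hs Ht. pose proof (sig_par _ _ _ Hst) as [P1 P2].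
  pose proof (EU_idem _ s t EU (sig_sym _ _ _ Hst)) as He.
  destruct (Xss s x Hs) as [X1 X2].
  assert (Hc : dom t = cod (mul (inv s) s)) by dc.
  assert (U1 : Xs (inv (mul t (mul (inv s) s))) x) by (apply G_iff; auto; split; auto; now rewrite X2).
  assert (U2 : th (mul t (mul (inv s) s)) x = th t x) by (rewrite G_eq, X2; auto; now rewrite X2).
  rewrite <- massoc in U1, U2 by dc.
  assert (Hc2 : dom (mul t (inv s)) = cod s) by dc.
  apply G_iff in U1; auto. destruct U1 as [_ U1].
  rewrite G_eq in U2; auto. rewrite idem_id in U2; auto.
  rewrite (idem_inv _ _ He) in U1. exact U1.
Qed.


Definition al (s : arr S) (x : X) : X :=
  match excluded_middle_informative (exists t, sigma s t /\ Xs (inv t) x) with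
  | left H => th (proj1_sig (constructive_indefinite_description _ H)) x
  | right _ => th s x
  end.

Lemma al_spec s t x : sigma s t -> Xs (inv t) x -> al s x = th t x.
Proof.
  intros Hst Ht. unfold al. destruct excluded_middle_informative as [H|H]; [|exfalso; eauto].
  destruct (constructive_indefinite_description _ H) as [t' [H1 H2]]; simpl.
  apply goalA; auto. eapply sig_trans; [apply sig_sym; exact H1| exact Hst].
Qed.

Lemma DsigE s x : Dsig Xs (inv s) x <-> exists t, sigma s t /\ Xs (inv t) x.
Proof.
  split.
  - intros [u [H1 H2]]. exists (inv u). split.
    + apply sig_inv in H1. now rewrite inv_inv in H1.
    + now rewrite inv_inv.
  - intros [t [H1 H2]]. exists (inv t). split; auto. now apply sig_inv.
Qed.

Lemma Dsig_sig s t x : sigma s t -> Dsig Xs s x -> Dsig Xs t x.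
Proof.
  intros H [u [H1 H2]]. exists u. split; auto. eapply sig_trans; [apply sig_sym; exact H|exact H1].
Qed.

Lemma al_maps s x : Dsig Xs (inv s) x -> Dsig Xs s (al s x).
Proof.
  intro H. apply DsigE in H. destruct H as [t [H1 H2]].
  rewrite (al_spec s t x) by auto. exists t. split; auto. now apply P_maps.
Qed.

Lemma al_invl s x : Dsig Xs (inv s) x -> al (inv s) (al s x) = x.
Proof.
  intro H. apply DsigE in H. destruct H as [t [H1 H2]].
  rewrite (al_spec s t x) by auto.
  rewrite (al_spec (inv s) (inv t)); [now apply P_invl| now apply sig_inv|].
  rewrite inv_inv. now apply P_maps.
Qed.

Lemma al_invr s y : Dsig Xs s y -> al s (al (inv s) y) = y.
Proof.
  intros [u [H1 H2]].
  rewrite (al_spec (inv s) (inv u) y); [| now apply sig_inv| now rewrite inv_inv].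
  rewrite (al_spec s u); [now apply P_invr| exact H1|].
  pose proof (P_maps (inv u) y) as M. rewrite inv_inv in M. auto.
Qed.

Lemma al_ord s x y : Dsig Xs (inv s) x -> Dsig Xs (inv s) y -> leX x y -> leX (al s x) (al s y).
Proof.
  intros Hx Hy Hxy. apply DsigE in Hy. destruct Hy as [t [H1 H2]].
  destruct HO as [Id Iso].
  assert (Hx' : Xs (inv t) x) by (eapply Id; eauto).
  rewrite (al_spec s t x), (al_spec s t y) by auto.
  apply Iso; auto.
Qed.


Lemma main_sec :
  (forall s t x, sigma s t -> Xs (inv s) x -> Xs (inv t) x -> th s x = th t x) /\
  exists al : arr S -> X -> X,
    (forall s t x, sigma s t -> Xs (inv t) x -> al s x = th t x) /\
    quot_partial_action S (Dsig Xs) al /\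
    ordered_action leX inv (Dsig Xs) al /\
    (forall s x, Xs (inv s) x -> al s x = th s x).
Proof.
  split; [exact goalA|]. exists al. split; [exact al_spec|]. split; [|split].
  - split.
    + intros s t H. split.
      * intro x; split; apply Dsig_sig; auto using sig_sym.
      * intros x Hx. apply DsigE in Hx. destruct Hx as [u [H1 H2]].
        rewrite (al_spec s u), (al_spec t u); auto.
        eapply sig_trans; [apply sig_sym; exact H| exact H1].
    + split; [|split; [|split; [|split]]].
      * intro s. split; [intros; now apply al_maps|split].
        -- intros x y Hx Hy E. rewrite <- (al_invl s x Hx), <- (al_invl s y Hy), E. reflexivity.
        -- intros y Hy. exists (al (inv s) y). split; [|now apply al_invr].
           apply al_maps. now rewrite inv_inv.
      * intro s. split; intros; [now apply al_invl| now apply al_invr].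
      * intro x. destruct (P_cover x) as [s Hs]. exists s, s. split; [apply sig_refl|auto].
      * intros s t Hc x Hx Hy. unfold composable in Hc.
        apply DsigE in Hx. destruct Hx as [v [Hv1 Hv2]].
        rewrite (al_spec t v x) in Hy by auto.
        apply DsigE in Hy. destruct Hy as [w [Hw1 Hw2]].
        pose proof (sig_par _ _ _ Hv1) as [P1 P2]. pose proof (sig_par _ _ _ Hw1) as [P3 P4].
        assert (Hc' : dom w = cod v) by congruence.
        assert (Gi : Xs (inv (mul w v)) x) by (apply G_iff; auto).
        assert (Ge : th (mul w v) x = th w (th v x)) by (apply G_eq; auto).
        assert (Hsig : sigma (mul s t) (mul w v)) by (apply sig_mul; auto).
        split; [apply DsigE; exists (mul w v); auto|].
        rewrite (al_spec (mul s t) (mul w v) x) by auto. rewrite (al_spec t v x) by auto.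
        rewrite (al_spec s w (th v x)) by auto. exact Ge.
      * intros s t [P1 [P2 [u [Hc1 [Hc2 [Hu Hs]]]]]] x Hx. unfold composable in *.
        apply Dsig_sig with s; auto.
        pose proof (sig_uu S u Hc2 Hu) as Hu'.
        apply sig_trans with (mul t u); auto.
        apply sig_trans with (mul t (mul (inv u) u)).
        -- apply sig_mul; auto using sig_refl.
        -- apply sig_le. apply le_right; [apply idem_s's|]. rewrite cmul, cod_inv by (rewrite dom_inv; reflexivity). congruence.
  - split.
    + intros s x y [t [H1 H2]] Hxy. exists t; split; auto. destruct HO as [Id _]. eapply Id; eauto.
    + intros s x y Hx Hy. split; [now apply al_ord|]. intro H.
      pose proof (al_ord (inv s) (al s x) (al s y)) as K. rewrite inv_inv in K.
      rewrite (al_invl s x Hx), (al_invl s y Hy) in K. apply K; auto using al_maps.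
  - intros s x H. apply al_spec; [apply sig_refl|auto].
Qed.

End Act.

Theorem mainTheorem13 (S : inverse_semigroupoid) (X : Type)
    (leX : X -> X -> Prop)
    (leX_refl : forall x, leX x x)
    (leX_antisym : forall x y, leX x y -> leX y x -> x = y)
    (leX_trans : forall x y z, leX x y -> leX y z -> leX x z)
    (Xs : arr S -> X -> Prop) (th : arr S -> X -> X) :
  E_unitary S ->
  sg_global_action S Xs th ->
  ordered_action leX inv Xs th ->
  (forall s t x, sigma s t -> Xs (inv s) x -> Xs (inv t) x -> th s x = th t x) /\
  exists al : arr S -> X -> X,
    (forall s t x, sigma s t -> Xs (inv t) x -> al s x = th t x) /\
    quot_partial_action S (Dsig Xs) al /\
    ordered_action leX inv (Dsig Xs) al /\
    (forall s x, Xs (inv s) x -> al s x = th s x).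
Proof.
  intros EU HG HO. exact (main_sec S X leX Xs th EU HG HO).
Qed.
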